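(* Let $q\in\mathbb{C}^\times$ be not a root of unity. The map $\mathbf{u}^{\langle0\rangle}:\mathbb{C}[x]^{\langle0\rangle}\to\mathbb{C}^\times\times\prod_{t>0}\mathbb{C}$ is injective.
   Context: $[k]=(q^k-q^{-k})/(q-q^{-1})$. $p_t(q)(x_1,\dots,x_k)=\sum_{\lambda\vdash t,\ell(\lambda)\le k}q^{-\ell(\lambda)}(q-q^{-1})^{\ell(\lambda)-1}m_\lambda(x_1,\dots,x_k)$ ($m_\lambda$ the monomial symmetric polynomial, $\ell(\lambda)$ the number of nonzero parts). $\mathbb{C}[x]^{\langle0\rangle}$ is the set of polynomials $\varphi=\beta_\varphi(x-\gamma_1)\cdots(x-\gamma_k)\in\mathbb{C}[x]$ whose leading coefficient $\beta_\varphi$ equals $\pm1$, and $\mathbf{u}^{\langle0\rangle}(\varphi)=(\beta_\varphi,(0)_{t>0})$ if $k=0$, $(\beta_\varphi q^k,(p_t(q)(\gamma_1,\dots,\gamma_k))_{t>0})$ if $k>0$. *)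

(* Defs.v *)
From HB Require Import structures.
From mathcomp Require Import all_boot all_order all_algebra.
From mathcomp Require Import Rstruct complex.
Set Implicit Arguments. Unset Strict Implicit. Unset Printing Implicit Defensive.
Import Order.TTheory GRing.Theory Num.Theory.
Local Open Scope ring_scope.

Definition C : numClosedFieldType := complex Rdefinitions.R.

Definition vals (k t : nat) (a : {ffun 'I_k -> 'I_t.+1}) : seq nat :=
  [seq (a i : nat) | i <- enum 'I_k].

(* lam (a function 'I_k -> 'I_t.+1, i.e. a k-vector of naturals <= t) encodes
   a partition of t with at most k nonzero parts: its entries are
   nonincreasing (the parts, padded with zeros) and sum to t. *)
Definition is_partition (k t : nat) (lam : {ffun 'I_k -> 'I_t.+1}) : bool :=
  sorted geq (vals lam) && (sumn (vals lam) == t).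

Definition plength (k t : nat) (lam : {ffun 'I_k -> 'I_t.+1}) : nat :=
  count (fun n => n != 0%N) (vals lam).

Definition monsym (F : comNzRingType) (k t : nat)
    (lam : {ffun 'I_k -> 'I_t.+1}) (x : 'I_k -> F) : F :=
  \sum_(alpha : {ffun 'I_k -> 'I_t.+1} | perm_eq (vals alpha) (vals lam))
     \prod_(i < k) x i ^+ (alpha i : nat).

Definition p_q (t : nat) (q : C) (k : nat) (x : 'I_k -> C) : C :=
  \sum_(lam : {ffun 'I_k -> 'I_t.+1} | is_partition lam)
     q ^- plength lam * (q - q^-1) ^+ (plength lam).-1 * monsym lam x.

(* the roots gamma_1..gamma_k (with multiplicity) of phi :
   phi = lead_coef phi * (x - gamma_1) ... (x - gamma_k) *)
Definition roots_of (phi : {poly C}) : seq C :=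
  proj1_sig (closed_field_poly_normal phi).

Definition in_Cx0 (phi : {poly C}) : Prop :=
  lead_coef phi = 1 \/ lead_coef phi = -1.

(* u^<0>(phi), as a pair (first component, sequence indexed by t);
   only the entries t > 0 are meaningful (entry t = 0 is set to 0). *)
Definition u0 (q : C) (phi : {poly C}) : C * (nat -> C) :=
  let s := roots_of phi in
  let k := size s in
  if k == 0%N then (lead_coef phi, fun _ => 0)
  else (lead_coef phi * q ^+ k,
        fun t => if t == 0%N then 0
                 else p_q t q (fun i : 'I_k => nth 0 s i)).

(* Main.v *)
Require Import Defs.
From HB Require Import structures.
From mathcomp Require Import all_boot all_order all_algebra.
From mathcomp Require Import Rstruct complex.
From mathcomp Require Import ring.
Set Implicit Arguments. Unset Strict Implicit. Unset Printing Implicit Defensive.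
Import Order.TTheory GRing.Theory Num.Theory.
Local Open Scope ring_scope.


Definition cong (F : fieldType) (n : nat) (p p' : {poly F}) :=
  forall i, (i < n)%N -> p`_i = p'`_i.

Lemma cong_mul (F : fieldType) n (p p' r r' : {poly F}) :
  cong n p p' -> cong n r r' -> cong n (p * r) (p' * r').
Proof.
move=> hp hr i hi; rewrite !coefM; apply: eq_bigr => j _.
have hj : (j < n)%N by apply: leq_ltn_trans hi; rewrite -ltnS.
rewrite hp // hr //; apply: leq_ltn_trans hi; exact: leq_subr.
Qed.

Lemma cong_trans (F : fieldType) n (p r s : {poly F}) :
  cong n p r -> cong n r s -> cong n p s.
Proof. by move=> h1 h2 i hi; rewrite h1 // h2. Qed.

Lemma cong_sym (F : fieldType) n (p r : {poly F}) : cong n p r -> cong n r p.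
Proof. by move=> h i hi; rewrite h. Qed.

Lemma cong_refl (F : fieldType) n (p : {poly F}) : cong n p p.
Proof. by []. Qed.

Lemma cong_prod (F : fieldType) n (T : Type) (s : seq T) (f g : T -> {poly F}) :
  (forall x, cong n (f x) (g x)) ->
  cong n (\prod_(x <- s) f x) (\prod_(x <- s) g x).
Proof.
move=> h; elim: s => [|x s IH]; first by rewrite !big_nil.
by rewrite !big_cons; apply: cong_mul.
Qed.

Definition sigm (F : fieldType) (r : F) (p : {poly F}) := p \Po (r *: 'X).

Lemma coef_sig (F : fieldType) (r : F) p j : (sigm r p)`_j = r ^+ j * p`_j.
Proof.
rewrite /sigm coef_comp_poly.
have [hj|hj] := ltnP j (size p).
  rewrite (bigD1 (Ordinal hj)) //= big1 ?addr0.
    by rewrite exprZn coefZ coefXn eqxx mulr1 mulrC.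
  move=> i /eqP hi; rewrite exprZn coefZ coefXn.
  case: eqP => [e|_]; last by rewrite mulr0 mulr0.
  by exfalso; apply: hi; apply: val_inj; rewrite /= e.
rewrite nth_default // mulr0 big1 // => i _.
rewrite exprZn coefZ coefXn; case: eqP => [e|_]; last by rewrite mulr0 mulr0.
by move: (ltn_ord i); rewrite -e ltnNge hj.
Qed.

Lemma sigM (F : fieldType) (r : F) p p' : sigm r (p * p') = sigm r p * sigm r p'.
Proof. exact: comp_polyM. Qed.

Lemma size_sig (F : fieldType) (r : F) p : r != 0 -> size (sigm r p) = size p.
Proof.
move=> hr; rewrite /sigm size_comp_poly2 //.
by rewrite size_scale // size_polyX.
Qed.

Lemma const_poly (F : fieldType) (p : {poly F}) :
  (forall j, (0 < j)%N -> p`_j = 0) -> p = (p`_0)%:P.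
Proof.
move=> h; apply/polyP => j; rewrite coefC; case: j => [|j] //=.
exact: h.
Qed.

Lemma sig_fix (F : fieldType) (r : F) (P1 Q1 : {poly F}) :
  r != 0 -> (forall j, (0 < j)%N -> r ^+ j != 1) ->
  coprimep P1 Q1 -> P1 * sigm r Q1 = Q1 * sigm r P1 -> P1`_0 != 0 ->
  P1 = (P1`_0)%:P.
Proof.
move=> hr hrj hc he h0.
have hd : P1 %| sigm r P1.
  by rewrite -(Gauss_dvdpr _ hc) -he dvdp_mulr.
have hP1 : P1 != 0 by apply: contra h0 => /eqP ->; rewrite coef0.
have : P1 %= sigm r P1 by rewrite -dvdp_size_eqp // size_sig.
case/eqpP => [[c1 c2]] /= /andP [hc1 hc2] hcc.
have e0 := congr1 (fun p : {poly F} => p`_0) hcc; move: e0 => /=.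
rewrite !coefZ coef_sig expr0 mul1r => e0.
have ec : c1 = c2 by apply: (mulIf h0).
apply: const_poly => j hj.
have := congr1 (fun p : {poly F} => p`_j) hcc => /=; rewrite !coefZ coef_sig ec.
move=> e; apply/eqP; move: e => /eqP.
rewrite -subr_eq0 -mulrBr mulf_eq0 (negbTE hc2) /=.
rewrite -{1}(mul1r P1`_j) -mulrBl mulf_eq0 subr_eq0 eq_sym (negbTE (hrj j hj)) /=.
by [].
Qed.

Lemma sig_eq (F : fieldType) (r : F) (P Q : {poly F}) :
  r != 0 -> (forall j, (0 < j)%N -> r ^+ j != 1) ->
  P`_0 = 1 -> Q`_0 = 1 -> P * sigm r Q = Q * sigm r P -> P = Q.
Proof.
move=> hr hrj hP hQ he.
have hP0 : P != 0 by apply/eqP => e; move: hP; rewrite e coef0 => /eqP; rewrite eq_sym oner_eq0.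
set g := gcdp P Q.
have hg : g != 0 by rewrite gcdp_eq0 negb_and hP0.
have eP : P = P %/ g * g by rewrite divpK // dvdp_gcdl.
have eQ : Q = Q %/ g * g by rewrite divpK // dvdp_gcdr.
set P1 := P %/ g in eP *; set Q1 := Q %/ g in eQ *.
have hc : coprimep P1 Q1 by apply: coprimep_div_gcd; rewrite hP0.
have hsg : sigm r g != 0 by rewrite -size_poly_eq0 size_sig // size_poly_eq0.
have he1 : P1 * sigm r Q1 = Q1 * sigm r P1.
  apply: (mulIf (mulf_neq0 hg hsg)).
  move: he; rewrite eP eQ !sigM => he.
  by rewrite [LHS]mulrACA [RHS]mulrACA.
have hP10 : P1`_0 * g`_0 = 1 by rewrite -coef0M -eP.
have hQ10 : Q1`_0 * g`_0 = 1 by rewrite -coef0M -eQ.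
have n1 : P1`_0 != 0 by apply/eqP => e; move: hP10; rewrite e mul0r => /eqP; rewrite eq_sym oner_eq0.
have n2 : Q1`_0 != 0 by apply/eqP => e; move: hQ10; rewrite e mul0r => /eqP; rewrite eq_sym oner_eq0.
have ep1 := sig_fix hr hrj hc he1 n1.
have hc2 : coprimep Q1 P1 by rewrite coprimep_sym.
have eq1 := sig_fix hr hrj hc2 (esym he1) n2.
have hg0 : g`_0 != 0 by apply/eqP => e; move: hP10; rewrite e mulr0 => /eqP; rewrite eq_sym oner_eq0.
have e10 : P1`_0 = Q1`_0 by apply: (mulIf hg0); rewrite hP10 hQ10.
by rewrite eP eQ ep1 eq1 e10.
Qed.



Definition gfun (F : fieldType) (w : F) (n : nat) (x : F) : F :=
  if n == 0%N then 1 else w * x ^+ n.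
Definition Pm (F : fieldType) (w : F) (m : nat) (s : seq F) : {poly F} :=
  \prod_(x <- s) \poly_(n < m.+1) gfun w n x.
Definition Aof (F : fieldType) (s : seq F) : {poly F} :=
  \prod_(x <- s) (1 - x *: 'X).
Definition Bof (F : fieldType) (r : F) (s : seq F) : {poly F} :=
  \prod_(x <- s) (1 - (r * x) *: 'X).

Lemma K2 (F : fieldType) (w : F) m t s : (t <= m)%N ->
  (Pm w m s)`_t = (Pm w t s)`_t.
Proof.
move=> htm; have : cong t.+1 (Pm w m s) (Pm w t s).
  apply: cong_prod => x i hi; rewrite !coef_poly hi.
  by rewrite (leq_trans hi) // ltnS.
by apply.
Qed.

Lemma Pm0 (F : fieldType) (w : F) s : (Pm w 0 s)`_0 = 1.
Proof.
rewrite /Pm coef0_prod big1_seq // => x _; by rewrite coef_poly.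
Qed.

Lemma Aof0 (F : fieldType) (s : seq F) : (Aof s)`_0 = 1.
Proof.
rewrite /Aof coef0_prod big1_seq // => x _.
by rewrite coefB coef1 coefZ coefX /= mulr0 subr0.
Qed.

Lemma K3 (F : fieldType) (w : F) m s :
  cong m.+1 (Aof s * Pm w m s) (Bof (1 - w) s).
Proof.
rewrite /Aof /Pm /Bof -big_split /=; apply: cong_prod => x i hi.
rewrite mulrBl mul1r -scalerAl coefB coefZ coefXM !coef_poly hi.
rewrite coefB coef1 coefZ coefX.
case: i hi => [|[|i]] hi /=.
- by rewrite !mulr0.
- rewrite /gfun /= expr1 mulr1; ring.
- have -> : (i.+1 < m.+1)%N by apply: leq_trans hi.
  rewrite /gfun /= mulr0 subr0 exprS; ring.
Qed.

Lemma K4 (F : fieldType) (w : F) s1 s2 :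
  (forall t, (0 < t)%N -> (Pm w t s1)`_t = (Pm w t s2)`_t) ->
  Aof s1 * Bof (1 - w) s2 = Aof s2 * Bof (1 - w) s1.
Proof.
move=> h; apply/polyP => m.
have hall : forall t, (Pm w t s1)`_t = (Pm w t s2)`_t.
  by case=> [|t]; [rewrite !Pm0 | apply: h].
pose D := \poly_(t < m.+1) (Pm w t s1)`_t.
have c1 : cong m.+1 (Pm w m s1) D.
  by move=> i hi; rewrite coef_poly hi K2 // -ltnS.
have c2 : cong m.+1 (Pm w m s2) D.
  by move=> i hi; rewrite coef_poly hi K2 ?hall // -ltnS.
have e1 : cong m.+1 (Aof s1 * Bof (1 - w) s2) (Aof s1 * (Aof s2 * D)).
  apply: cong_mul; first exact: cong_refl.
  apply: (cong_trans (cong_sym (@K3 _ w m s2))).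
  apply: cong_mul; [exact: cong_refl | exact: c2].
have e2 : cong m.+1 (Aof s2 * Bof (1 - w) s1) (Aof s2 * (Aof s1 * D)).
  apply: cong_mul; first exact: cong_refl.
  apply: (cong_trans (cong_sym (@K3 _ w m s1))).
  apply: cong_mul; [exact: cong_refl | exact: c1].
by rewrite e1 // e2 // mulrA (mulrC (Aof s1)) mulrA.
Qed.

Lemma K5 (F : fieldType) (r : F) s : Bof r s = sigm r (Aof s).
Proof.
rewrite /Bof /Aof; elim: s => [|x s IH]; first by rewrite !big_nil /sigm -polyC1 comp_polyC.
rewrite !big_cons sigM IH; congr (_ * _).
by rewrite /sigm comp_polyB -polyC1 comp_polyC comp_polyZ comp_polyX scalerA mulrC.
Qed.

Definition Mof (F : fieldType) (s : seq F) : {poly F} :=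
  \prod_(x <- s) ('X - x%:P).

Lemma AM (F : fieldType) (s : seq F) j :
  (Aof s)`_j = if (j <= size s)%N then (Mof s)`_(size s - j) else 0.
Proof.
elim: s j => [|x s IH] j.
  by rewrite /Aof /Mof !big_nil /= coef1; case: j => //=; rewrite coef1.
rewrite /Aof /Mof !big_cons -/(Aof s) -/(Mof s) /=.
rewrite mulrBl mul1r -scalerAl coefB coefZ coefXM.
rewrite mulrBl coefB coefXM coefCM.
have hsz : size (Mof s) = (size s).+1 by rewrite size_prod_XsubC.
case: j => [|j] /=.
  rewrite IH leq0n subn0 /= mulr0 subr0 subSn //=.
  by rewrite subn0 (nth_default 0 (_ : size (Mof s) <= (size s).+1)%N) ?hsz // mulr0 subr0.
rewrite !IH ltnS subSS.
case: (ltngtP j (size s)) => hj.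
- have -> : (size s - j == 0)%N = false by apply/negbTE; rewrite subn_eq0 -ltnNge.
  by rewrite subnS.
- by rewrite mulr0 subr0.
- by rewrite hj subnn /= sub0r.
Qed.

Lemma K7 (F : fieldType) (s1 s2 : seq F) :
  Aof s1 = Aof s2 -> size s1 = size s2 -> Mof s1 = Mof s2.
Proof.
move=> hA hs; apply/polyP => i.
have [hi|hi] := leqP i (size s1).
  have := AM s1 (size s1 - i); rewrite hA AM -hs leq_subr.
  by rewrite subKn // => ->.
rewrite !nth_default // size_prod_XsubC //.
by rewrite -hs.
Qed.



Lemma geq_transitive : transitive geq.
Proof. move=> a b c h1 h2; exact: leq_trans h2 h1. Qed.

Lemma geq_antisym : antisymmetric geq.
Proof. move=> a b h; apply: anti_leq; by rewrite andbC. Qed.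

Lemma geq_total : total geq.
Proof. move=> a b; exact: leq_total. Qed.

Definition lam0 (k t : nat) (a : {ffun 'I_k -> 'I_t.+1}) : {ffun 'I_k -> 'I_t.+1} :=
  [ffun i : 'I_k => nth ord0 (sort (relpre (@nat_of_ord _) geq) [seq a j | j <- enum 'I_k]) i].

Lemma vals_lam0 k t (a : {ffun 'I_k -> 'I_t.+1}) : vals (lam0 a) = sort geq (vals a).
Proof.
rewrite /vals /lam0.
set S := sort _ _.
have hS : size S = k by rewrite size_sort size_map size_enum_ord.
have -> : [seq (([ffun i : 'I_k => nth ord0 S i]) i : nat) | i <- enum 'I_k]
   = [seq (nth ord0 S n : nat) | n <- [seq val i | i <- enum 'I_k]].
  by rewrite -map_comp; apply: eq_map => i /=; rewrite ffunE.
rewrite val_enum_ord; have -> : iota 0 k = iota 0 (size S) by rewrite hS.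
have -> : [seq (nth ord0 S n : nat) | n <- iota 0 (size S)] = [seq nat_of_ord x | x <- mkseq (nth ord0 S) (size S)].
  by rewrite /mkseq -map_comp.
by rewrite mkseq_nth /S -sort_map -map_comp.
Qed.

Lemma vals_inj k t (a b : {ffun 'I_k -> 'I_t.+1}) : vals a = vals b -> a = b.
Proof.
move=> h; apply/ffunP => i; apply: val_inj.
have := (iffRL (eq_in_map _ _ _) h) i; apply; by rewrite mem_enum.
Qed.

Lemma lam0_part k t (a : {ffun 'I_k -> 'I_t.+1}) :
  sumn (vals a) = t -> is_partition (lam0 a).
Proof.
move=> hs; rewrite /is_partition vals_lam0 (sort_sorted geq_total) /=.
by rewrite (perm_sumn (permEl (perm_sort _ _))) hs.
Qed.

Lemma lam0_uniq k t (a lam : {ffun 'I_k -> 'I_t.+1}) :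
  is_partition lam -> perm_eq (vals a) (vals lam) -> lam = lam0 a.
Proof.
move=> /andP [hsort _] hp; apply: vals_inj; rewrite vals_lam0.
apply: (sorted_eq geq_transitive geq_antisym) => //.
  exact: (sort_sorted geq_total).
by rewrite perm_sym perm_sort.
Qed.

Lemma count_pos (s : seq nat) : (0 < sumn s)%N -> (0 < count (fun n => n != 0%N) s)%N.
Proof.
elim: s => [|x s IH] //= h.
case: x h => [|x] h //=; by rewrite add0n IH.
Qed.

Lemma pq_sum (q : C) t k (g : 'I_k -> C) : (0 < t)%N ->
  (q - q^-1) * p_q t q g =
  \sum_(a : {ffun 'I_k -> 'I_t.+1} | sumn (vals a) == t)
     ((q - q^-1) / q) ^+ plength a * \prod_(i < k) g i ^+ (a i : nat).
Proof.
move=> ht; rewrite /p_q mulr_sumr.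
transitivity (\sum_(lam : {ffun 'I_k -> 'I_t.+1} | is_partition lam)
   \sum_(a : {ffun 'I_k -> 'I_t.+1} | perm_eq (vals a) (vals lam))
     ((q - q^-1) / q) ^+ plength a * \prod_(i < k) g i ^+ (a i : nat)).
  apply: eq_bigr => lam hlam.
  have hl : (0 < plength lam)%N.
    by apply: count_pos; case/andP: hlam => _ /eqP ->.
  rewrite /monsym mulr_sumr mulr_sumr; apply: eq_bigr => a ha.
  have -> : plength a = plength lam by rewrite /plength; exact: (permP ha).
  rewrite mulrA mulrA; congr (_ * _).
  rewrite expr_div_n -(prednK hl) exprS /=.
  rewrite exprS; ring.
rewrite (exchange_big_dep (fun a : {ffun 'I_k -> 'I_t.+1} => sumn (vals a) == t)) /=.
  apply: eq_bigr => a /eqP ha.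
  rewrite (big_pred1 (lam0 a)) // => lam /=.
  apply/andP/eqP => [[h1 h2]|->].
    exact: lam0_uniq.
  split; first exact: lam0_part.
  by rewrite vals_lam0 perm_sym perm_sort.
move=> lam a /andP [_ /eqP hs] hp; by rewrite (perm_sumn hp) hs.
Qed.



Lemma sumn_vals k t (a : {ffun 'I_k -> 'I_t.+1}) : sumn (vals a) = (\sum_(i < k) (a i : nat))%N.
Proof.
rewrite /vals sumnE big_map big_enum; apply: eq_bigl => i; by rewrite inE.
Qed.

Lemma prod_if (F : fieldType) (w : F) (I : Type) (r : seq I) (P : pred I) :
  \prod_(i <- r) (if P i then w else 1) = w ^+ count P r.
Proof.
elim: r => [|x r IH]; first by rewrite big_nil.
by rewrite big_cons IH /=; case: (P x); rewrite ?mul1r // exprD expr1.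
Qed.

Lemma gprod (F : fieldType) (w : F) k t (a : {ffun 'I_k -> 'I_t.+1}) (g : 'I_k -> F) :
  \prod_(i < k) gfun w (a i) (g i) = w ^+ plength a * \prod_(i < k) g i ^+ (a i : nat).
Proof.
have e : forall n x, gfun w n x = (if n != 0%N then w else 1) * x ^+ n.
  by move=> [|n] x; rewrite /gfun /= ?expr0 ?mulr1 ?mul1r.
under eq_bigr do rewrite e.
rewrite big_split /=; congr (_ * _).
rewrite /plength /vals count_map -prod_if big_enum; apply: eq_bigl => i; by rewrite inE.
Qed.

Definition Pk (F : fieldType) (w : F) (t k : nat) (g : 'I_k -> F) : {poly F} :=
  \prod_(i < k) \poly_(n < t.+1) gfun w n (g i).

Lemma coefPk (F : fieldType) (w : F) t k (g : 'I_k -> F) :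
  (Pk w t g)`_t = \sum_(a : {ffun 'I_k -> 'I_t.+1} | sumn (vals a) == t)
                     \prod_(i < k) gfun w (a i) (g i).
Proof.
rewrite /Pk; under eq_bigr do rewrite poly_def.
rewrite bigA_distr_bigA /= coef_sum [RHS]big_mkcond /=; apply: eq_bigr => a _.
rewrite scaler_prod prodrXr coefZ coefXn sumn_vals.
by rewrite eq_sym; case: eqP => _; rewrite ?mulr1 ?mulr0.
Qed.

Lemma PmPk (F : fieldType) (w : F) t (s : seq F) :
  Pm w t s = Pk w t (fun i : 'I_(size s) => nth 0 s i).
Proof. by rewrite /Pm /Pk (big_nth 0) big_mkord. Qed.

Lemma K1 (q : C) t (s : seq C) : (0 < t)%N ->
  (q - q^-1) * p_q t q (fun i : 'I_(size s) => nth 0 s i) = (Pm ((q - q^-1) / q) t s)`_t.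
Proof.
move=> ht; rewrite pq_sum // PmPk coefPk; apply: eq_bigr => a _.
by rewrite gprod.
Qed.



Lemma lead_sq (phi : {poly C}) : in_Cx0 phi -> lead_coef phi ^+ 2 = 1.
Proof. by case=> ->; rewrite ?expr1n ?sqrrN ?expr1n. Qed.

Lemma pow_inj (q : C) (hq0 : q != 0)
    (hq : forall n : nat, (0 < n)%N -> q ^+ n != 1) a b :
  q ^+ a = q ^+ b -> a = b.
Proof.
wlog hab : a b / (a <= b)%N.
  move=> W e; case: (leqP a b) => h; first exact: W.
  by apply/esym/W => //; apply: ltnW.
move=> e; apply/eqP; rewrite eqn_leq hab /=; apply/negP => /negP; rewrite -ltnNge => hlt.
have : q ^+ (b - a) == 1.
  have ha : q ^+ a != 0 by rewrite expf_neq0.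
  by apply/eqP; apply: (mulfI ha); rewrite -exprD subnKC // mulr1 e.
by rewrite (negbTE (hq _ _)) // subn_gt0.
Qed.

Lemma roots_eq (phi : {poly C}) : phi = lead_coef phi *: Mof (roots_of phi).
Proof. exact: (proj2_sig (closed_field_poly_normal phi)). Qed.

Unset Implicit Arguments.

Theorem mainTheorem15 (q : C) (hq0 : q != 0)
    (hq : forall n : nat, (0 < n)%N -> q ^+ n != 1)
    (phi1 phi2 : {poly C}) :
  in_Cx0 phi1 -> in_Cx0 phi2 ->
  u0 q phi1 = u0 q phi2 -> phi1 = phi2.
Proof.
move=> h1 h2 H.
have E1 := roots_eq phi1; have E2 := roots_eq phi2.
move: H E1 E2; rewrite /u0 /=.
move: (roots_of phi1) (roots_of phi2) => s1 s2 H E1 E2; move: H.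
have l1 := lead_sq h1; have l2 := lead_sq h2.
have q2 : forall k, (0 < k)%N -> q ^+ (2 * k) != 1.
  by move=> k hk; apply: hq; rewrite muln_gt0 hk.
case: eqP => hs1; case: eqP => hs2 => HH; have eL := congr1 fst HH; have eF := congr1 snd HH; rewrite /= in eL eF; clear HH.
- rewrite E1 E2 eL; move/size0nil: hs1 ->; by move/size0nil: hs2 ->.
- exfalso; move: (q2 (size s2)); rewrite lt0n; move/eqP: hs2 => hs2 /(_ hs2).
  by rewrite mulnC exprM -[X in _ != X]l1 eL exprMn l2 mul1r eqxx.
- exfalso; move: (q2 (size s1)); rewrite lt0n; move/eqP: hs1 => hs1 /(_ hs1).
  by rewrite mulnC exprM -[X in _ != X]l2 -eL exprMn l1 mul1r eqxx.
have hk : size s1 = size s2.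
  have e := congr1 (fun x => x ^+ 2) eL; rewrite /= !exprMn l1 l2 !mul1r -!exprM in e.
  by have /eqP := pow_inj hq0 hq e; rewrite eqn_pmul2r // => /eqP.
have eL' : lead_coef phi1 = lead_coef phi2.
  by apply: (mulIf (expf_neq0 (size s1) hq0)); rewrite eL hk.
pose w := (q - q^-1) / q.
have hP : forall t, (0 < t)%N -> (Pm w t s1)`_t = (Pm w t s2)`_t.
  move=> t ht; rewrite -!K1 //; congr (_ * _).
  have := congr1 (fun f => f t) eF; rewrite /=.
  have -> : (t == 0%N) = false by rewrite eqn0Ngt ht.
  by [].
have hA := K4 hP; rewrite !K5 in hA.
have hr : 1 - w = (q ^+ 2)^-1 by rewrite /w; field.
have hr0 : 1 - w != 0 by rewrite hr invr_eq0 expf_neq0.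
have hrj : forall j, (0 < j)%N -> (1 - w) ^+ j != 1.
  by move=> j hj; rewrite hr exprVn invr_eq1 -exprM; apply: q2.
have hAA := sig_eq hr0 hrj (Aof0 _) (Aof0 _) hA.
have hM := K7 hAA hk.
by rewrite E1 E2 eL' hM.
Qed.
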